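(* Let $G$ be a maximal $3$-$\gamma_{c}$-vertex critical graph, let $I$ be a maximum independent set of $G$, and let $W$ be a vertex set inducing a maximum complete subgraph of $G$, chosen (among all such sets) so that $|I\cap W|$ is minimum. If $|I|+|W|=n-1$, where $n=|V(G)|$, then $|W\cap I|=0$.
   Context: All graphs are finite, simple and connected. A set $D\subseteq V(G)$ is a connected dominating set of $G$ if every vertex of $G$ is in $D$ or adjacent to a vertex of $D$, and $G[D]$ is connected; $\gamma_{c}(G)$ is the minimum cardinality of such a set. $G$ is $k$-$\gamma_{c}$-edge critical if $\gamma_{c}(G)=k$ and $\gamma_{c}(G+uv)<k$ for every pair of non-adjacent vertices $u,v$. A $2$-connected graph $G$ is $k$-$\gamma_{c}$-vertex critical if $\gamma_{c}(G)=k$ and $\gamma_{c}(G-v)<k$ for every $v\in V(G)$. $G$ is maximal $k$-$\gamma_{c}$-vertex critical if it is both $k$-$\gamma_{c}$-edge critical and $k$-$\gamma_{c}$-vertex critical. *)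

(* Defs.v *)
(* A graph is given by a vertex set V : {set T} over a finType T
   and an adjacency relation e : rel T (assumed symmetric and irreflexive). *)
From mathcomp Require Import all_boot.
Set Implicit Arguments. Unset Strict Implicit. Unset Printing Implicit Defensive.

Section Graphs.
Variable T : finType.

Definition simple_rel (e : rel T) : Prop := symmetric e /\ (forall x, ~~ e x x).

Definition restr (e : rel T) (D : {set T}) : rel T :=
  [rel x y | [&& x \in D, y \in D & e x y]].

Definition conn_set (e : rel T) (D : {set T}) : bool :=
  [forall x in D, forall y in D, connect (restr e D) x y].

Definition cds (V : {set T}) (e : rel T) (D : {set T}) : bool :=
  [&& D \subset V,
      [forall x in V, (x \in D) || [exists y in D, e x y]] &
      conn_set e D].

(* connected domination number; defaults to #|V| if no CDS exists
   (only used on connected graphs, where a CDS always exists) *)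
Definition gamma_c (V : {set T}) (e : rel T) : nat :=
  \big[minn/#|V|]_(D : {set T} | cds V e D) #|D|.

Definition add_edge (e : rel T) (u v : T) : rel T :=
  [rel x y | [|| e x y, (x == u) && (y == v) | (x == v) && (y == u)]].

Definition two_connected (V : {set T}) (e : rel T) : Prop :=
  2 < #|V| /\ conn_set e V /\ (forall v, v \in V -> conn_set e (V :\ v)).

Definition edge_critical (k : nat) (V : {set T}) (e : rel T) : Prop :=
  gamma_c V e = k /\
  (forall u v, u \in V -> v \in V -> u != v -> ~~ e u v ->
     gamma_c V (add_edge e u v) < k).

Definition vertex_critical (k : nat) (V : {set T}) (e : rel T) : Prop :=
  two_connected V e /\ gamma_c V e = k /\
  (forall v, v \in V -> gamma_c (V :\ v) e < k).

Definition maximal_vertex_critical (k : nat) (V : {set T}) (e : rel T) : Prop :=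
  edge_critical k V e /\ vertex_critical k V e.

Definition independent (e : rel T) (I : {set T}) : bool :=
  [forall x in I, forall y in I, ~~ e x y].

Definition clique (e : rel T) (W : {set T}) : bool :=
  [forall x in W, forall y in W, (x != y) ==> e x y].

Definition max_independent (V : {set T}) (e : rel T) (I : {set T}) : Prop :=
  I \subset V /\ independent e I /\
  (forall J : {set T}, J \subset V -> independent e J -> #|J| <= #|I|).

Definition max_clique (V : {set T}) (e : rel T) (W : {set T}) : Prop :=
  W \subset V /\ clique e W /\
  (forall W' : {set T}, W' \subset V -> clique e W' -> #|W'| <= #|W|).

End Graphs.

(* Main.v *)
Require Import Defs.
From mathcomp Require Import all_boot zify.
Set Implicit Arguments. Unset Strict Implicit. Unset Printing Implicit Defensive.

Lemma gamma_le (T : finType) (V : {set T}) e D : cds V e D -> gamma_c V e <= #|D|.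
Proof.
move=> H; rewrite /gamma_c.
have: D \in index_enum {set T} by rewrite mem_index_enum.
elim: (index_enum _) => [//|s0 s IH]; rewrite inE big_cons => /orP[/eqP <-|Hs].
  by rewrite H geq_minl.
case: ifP => _; last exact: IH.
by rewrite geq_min IH // orbT.
Qed.

Lemma gamma_lt (T : finType) (V : {set T}) e k :
  gamma_c V e < k -> k <= #|V| -> exists D, cds V e D /\ #|D| < k.
Proof.
move=> H Hk; case: (pickP (fun D => cds V e D && (#|D| < k))) => [D /andP[]|H0].
  by exists D.
suff: k <= gamma_c V e by rewrite leqNgt H.
rewrite /gamma_c; elim/big_ind: _ => //.
  by move=> m1 m2 h1 h2; rewrite leq_min h1.
by move=> D HD; have := H0 D; rewrite HD /= => /negbT; rewrite -leqNgt.
Qed.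

Lemma conn_pair (T : finType) (r : rel T) (D : {set T}) p q :
  (forall u, ~~ r u u) -> p \in D -> (forall u, u \in D -> u = p \/ u = q) ->
  p != q -> connect (restr r D) p q -> r p q.
Proof.
move=> irr pD HD pq /connectP [[|s0 s] /= Hp Hl]; first by rewrite Hl eqxx in pq.
move/andP: Hp => [/andP [_ /andP[s0D Hr]] _].
by case: (HD _ s0D) => Hs; subst s0 => //; rewrite (negbTE (irr p)) in Hr.
Qed.

Lemma cds2 (T : finType) (e : rel T) p q :
  simple_rel e -> e p q -> (forall u, [|| u == p, u == q, e u p | e u q]) ->
  gamma_c [set: T] e <= 2.
Proof.
move=> [sym irr] epq Hd.
suff H : cds [set: T] e [set p; q].
  by apply: leq_trans (gamma_le H) _; rewrite cards2; case: (p != q).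
apply/and3P; split; first exact: subsetT.
  apply/forallP => u; apply/implyP => _.
  case/or4P: (Hd u) => [/eqP->|/eqP->| h | h]; rewrite ?inE ?eqxx ?orbT //;
    apply/orP; right.
    by apply/existsP; exists p; rewrite !inE eqxx h.
  by apply/existsP; exists q; rewrite !inE eqxx h orbT.
have epq' : e q p by rewrite sym.
apply/forallP => u; apply/implyP => Hu; apply/forallP => v; apply/implyP => Hv.
move: Hu Hv; rewrite !inE.
move=> /orP[] /eqP -> /orP[] /eqP ->.
all: try exact: connect0.
all: apply: connect1.
all: rewrite /restr /= !inE !eqxx ?orbT //.
Qed.

Lemma has_nbr (T : finType) (e : rel T) v u :
  conn_set e [set: T] -> u != v -> exists w, e v w.
Proof.
move=> /forallP /(_ v) /implyP /(_ (in_setT v)) /forallP /(_ u) /implyP /(_ (in_setT u)).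
move=> /connectP [[|s0 s] /= Hp Hl] uv; first by rewrite Hl eqxx in uv.
by move/andP: Hp => [/andP [_ /andP[_ Hr]] _]; exists s0.
Qed.


Lemma pairD_eq (T : finType) (D : {set T}) p q :
  p \in D -> q \in D -> p != q -> #|D| <= 2 -> D = [set p; q].
Proof.
move=> pD qD pq HD; apply/eqP; rewrite eq_sym eqEcard cards2 pq HD andbT.
by apply/subsetP => u; rewrite !inE => /orP[] /eqP ->.
Qed.

Lemma vc (T : finType) (e : rel T) v :
  simple_rel e -> conn_set e [set: T] -> gamma_c [set: T] e = 3 ->
  gamma_c ([set: T] :\ v) e < 3 -> 4 <= #|T| ->
  exists p q, [/\ e p q, p != v, q != v, ~~ e v p & ~~ e v q] /\
     (forall u, u != v -> [|| u == p, u == q, e u p | e u q]).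
Proof.
move=> [sym irr] conn g3 gv n4.
have cV : 3 <= #|[set: T] :\ v|.
  by move: n4; rewrite -cardsT (cardsD1 v) in_setT add1n ltnS.
have [D [/and3P [sub /forallP dom cn] D3]] := gamma_lt gv cV.
have no2 : ~ (gamma_c [set: T] e <= 2) by rewrite g3.
have nb : forall d, d \in D -> ~~ e v d.
  move=> d dD; apply/negP => evd.
  have : cds [set: T] e D.
    apply/and3P; split; [exact: subsetT| |exact: cn].
    apply/forallP => u; apply/implyP => _.
    case: (eqVneq u v) => [->|uv].
      by apply/orP; right; apply/existsP; exists d; rewrite dD.
    by move: (dom u); rewrite !inE uv.
  by move/gamma_le; rewrite g3 => H; move: (leq_ltn_trans H D3); rewrite ltnn.
have dom' : forall u, u != v -> (u \in D) || [exists y in D, e u y].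
  by move=> u uv; move: (dom u); rewrite !inE uv.
have Dv : forall d, d \in D -> d != v.
  by move=> d dD; move: (subsetP sub d dD); rewrite !inE => /andP[].
have [u0 u0v] : exists u0, u0 != v.
  have : 0 < #|[set: T] :\ v| by lia.
  by case/card_gt0P => u0; rewrite !inE => /andP[]; exists u0.
have [p pD] : exists p, p \in D.
  case/orP: (dom' _ u0v) => [|/existsP [y /andP[yD _]]]; first by exists u0.
  by exists y.
case: (pickP (fun q => (q \in D) && (q != p))) => [q /andP [qD qp]|H].
  have pq : p != q by rewrite eq_sym.
  have HD := pairD_eq pD qD pq (ltnSE D3).
  have epq : e p q.
    apply: (conn_pair irr pD) pq _.
      by move=> u; rewrite HD !inE => /orP[] /eqP ->; [left|right].
    by move/forallP: cn => /(_ p) /implyP /(_ pD) /forallP /(_ q) /implyP /(_ qD).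
  exists p, q; split; first by split; rewrite ?Dv ?nb.
  move=> u uv; case/orP: (dom' _ uv) => [|/existsP [y]]; rewrite HD !inE.
    by case/orP => ->; rewrite ?orbT.
  by case/andP => /orP[] /eqP -> ->; rewrite !orbT.
have Dp : forall d, d \in D -> d = p.
  by move=> d dD; move: (H d); rewrite dD /= => /negbFE /eqP.
have [w evw] := has_nbr conn (Dv _ pD).
have wv : w != v by apply/eqP => h; move: evw; rewrite h (negbTE (irr v)).
have ewp : e p w.
  case/orP: (dom' _ wv) => [/Dp wp|/existsP [y /andP [/Dp -> //]]]; last by rewrite sym.
  by move: (nb _ pD); rewrite -wp evw.
exfalso; apply: no2; apply: (cds2 (conj sym irr) ewp) => u.
case: (eqVneq u v) => [->|uv]; first by rewrite evw !orbT.
case/orP: (dom' _ uv) => [/Dp ->|/existsP [y /andP [/Dp -> ->]]]; first by rewrite eqxx.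
by rewrite !orbT.
Qed.


Lemma core (T : finType) (e : rel T) (I W : {set T}) (x a b : T) :
  symmetric e -> (forall u, ~~ e u u) ->
  (forall u v, u \in I -> v \in I -> ~~ e u v) ->
  (forall u v, u \in W -> v \in W -> u != v -> e u v) ->
  x \in I -> x \in W -> (forall u, u \in I -> u \in W -> u = x) ->
  (forall u, [|| u \in I, u \in W, u == a | u == b]) ->
  a \notin I -> a \notin W -> b \notin I -> b \notin W -> a != b ->
  e x a -> ~~ e x b ->
  (forall v, exists p q, [/\ e p q, p != v, q != v, ~~ e v p & ~~ e v q] /\
     (forall u, u != v -> [|| u == p, u == q, e u p | e u q])) ->
  gamma_c [set: T] e = 3 ->
  (forall u v, u != v -> ~~ e u v -> gamma_c [set: T] (add_edge e u v) < 3) ->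
  3 <= #|T| ->
  (forall W' : {set T}, max_clique [set: T] e W' -> I :&: W' != set0) ->
  (forall W' : {set T}, W' \subset [set: T] -> clique e W' -> #|W'| <= #|W|) ->
  False.
Proof.
move=> sym irr ind clq xI xW IW cover aI aW bI bW ab exa nxb VC g3 EC n3 minW maxW.
have no2 : ~ (gamma_c [set: T] e <= 2) by rewrite g3.
have irrF : forall u, e u u = false by move=> u; apply: negbTE.
have neqm : forall u v (A : {set T}), u \in A -> v \notin A -> u != v.
  by move=> u v A uA vA; apply: contraNneq vA => <-.
have wa : forall w, w \in W -> w != x -> exists r,
    [/\ e a r, r != w, ~~ e w r, ~~ e w a &
     forall u, u != w -> [|| u == a, u == r, e u a | e u r]].
  move=> w wW wx; have [p [q [[epq pw qw nwp nwq] dom]]] := VC w.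
  have xw : x != w by rewrite eq_sym.
  have key : forall p', p' != w -> ~~ e w p' -> e x p' -> p' = a.
    move=> p' p'w nwp' exp'; case/or4P: (cover p') => [p'I|p'W|/eqP//|/eqP pb].
    - by move: (ind _ _ xI p'I); rewrite exp'.
    - by have := clq _ _ wW p'W; rewrite eq_sym p'w => /(_ isT) h; rewrite h in nwp'.
    - by move: nxb; rewrite -pb exp'.
  case/or4P: (dom _ xw) => [/eqP xp|/eqP xq|exp|exq].
  - by move: nwp; rewrite -xp clq // eq_sym.
  - by move: nwq; rewrite -xq clq // eq_sym.
  - have pa := key _ pw nwp exp; subst p.
    by exists q; split.
  - have qa := key _ qw nwq exq; subst q.
    exists p; split => //; first by rewrite sym.
    by move=> u /dom; case/or4P => ->; rewrite ?orbT.
have F2 : forall w, w \in W -> w != x -> ~~ e a w.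
  by move=> w wW wx; have [r [_ _ _ h _]] := wa w wW wx; rewrite sym.
have nx : forall u, u != x -> ~~ e x u -> (u \in I) || (u == b).
  move=> u ux nxu; case/or4P: (cover u) => [->//|uW|/eqP ua|->]; rewrite ?orbT //.
    by rewrite clq // eq_sym in nxu.
  by rewrite ua exa in nxu.
have F3 : forall y, y \in I -> y != x -> e y b.
  have [p [q [[epq px qx nxp nxq] dom]]] := VC x.
  wlog pb : p q epq px qx nxp nxq dom / p == b.
    move=> H; case/orP: (nx p px nxp) => [pI|pb]; last exact: (H p q).
    case/orP: (nx q qx nxq) => [qI|qb]; first by rewrite (negbTE (ind _ _ pI qI)) in epq.
    apply: (H q p) => //; first by rewrite sym.
    by move=> u /dom; case/or4P => ->; rewrite ?orbT.
  move/eqP: pb => pb; subst p.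
  have qI : q \in I.
    by case/orP: (nx q qx nxq) => // /eqP qb; rewrite qb irrF in epq.
  move=> y yI yx; case/or4P: (dom y yx) => [/eqP yb|/eqP yq|//|eyq].
  - by rewrite -yb yI in bI.
  - by rewrite yq sym.
  - by rewrite (negbTE (ind _ _ yI qI)) in eyq.
have maxab : e a b -> max_clique [set: T] e [set a; b] -> False.
  move=> eab mc; move/set0Pn: (minW _ mc) => [u]; rewrite !inE => /andP [uI /orP[] /eqP eu].
    by rewrite -eu uI in aI.
  by rewrite -eu uI in bI.
have cl2 : e a b -> clique e [set a; b].
  move=> eab; apply/forallP => u; apply/implyP => uab; apply/forallP => v; apply/implyP => vab.
  apply/implyP => uv; move: uab vab uv; rewrite !inE => /orP[] /eqP -> /orP[] /eqP ->;
    rewrite ?eqxx // => _; by rewrite sym.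
case: (boolP (e a b)) => eab.
  have A1 : forall w, w \in W -> w != x -> ~~ e b w.
    move=> w wW wx; apply/negP => ebw; apply: no2; apply: (cds2 (conj sym irr) ebw) => u.
    case/or4P: (cover u) => [uI|uW|/eqP->|/eqP->]; rewrite ?eqxx ?eab ?orbT //.
      case: (eqVneq u x) => [->|ux]; last by rewrite F3 ?orbT.
      by rewrite (clq x w) ?orbT // eq_sym.
    case: (eqVneq u w) => [->|uw]; first by rewrite ?eqxx ?orbT.
    by rewrite (clq u w) ?orbT.
  have nbW : forall u, u != b -> ~~ e b u -> u \in W.
    move=> u ub nbu; case/or4P: (cover u) => [uI|//|/eqP ua|/eqP ub'].
    - case: (eqVneq u x) => [->//|ux]; by rewrite sym F3 in nbu.
    - by rewrite ua sym eab in nbu.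
    - by rewrite ub' eqxx in ub.
  have [p [q [[epq pb qb nbp nbq] dom]]] := VC b.
  have pW := nbW _ pb nbp; have qW := nbW _ qb nbq.
  wlog px : p q epq pb qb nbp nbq dom pW qW / p == x.
    move=> H; case/or4P: (dom a ab) => [/eqP ap|/eqP aq|eap|eaq].
    - by rewrite ap pW in aW.
    - by rewrite aq qW in aW.
    - case: (eqVneq p x) => [/eqP|px]; first exact: (H p q).
      by rewrite (negbTE (F2 _ pW px)) in eap.
    - case: (eqVneq q x) => [/eqP qx|qx]; last by rewrite (negbTE (F2 _ qW qx)) in eaq.
      apply: (H q p) => //; first by rewrite sym.
      by move=> u /dom; case/or4P => ->; rewrite ?orbT.
  move/eqP: px => px; subst p.
  have qx : q != x by apply/eqP => h; rewrite h irrF in epq.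
  have A3 : forall y, y \in I -> y != x -> e y q.
    move=> y yI yx; have yb : y != b := neqm _ _ _ yI bI.
    case/or4P: (dom y yb) => [/eqP h|/eqP h|h|//].
    - by rewrite h eqxx in yx.
    - by move: yx; rewrite (IW y yI) ?h // eqxx.
    - by rewrite (negbTE (ind _ _ yI xI)) in h.
  have [r [ear rq nqr nqa domr]] := wa q qW qx.
  have rb : r = b.
    case/or4P: (cover r) => [rI|rW|/eqP ra|/eqP //].
    - case: (eqVneq r x) => [h|rx]; first by rewrite h clq // in nqr.
      by rewrite sym A3 in nqr.
    - by rewrite clq // eq_sym in nqr.
    - by rewrite ra irrF in ear.
  subst r.
  have A5 : W \subset [set x; q].
    apply/subsetP => u uW; rewrite !inE.
    case: (eqVneq u q) => [->|uq]; first by rewrite ?eqxx ?orbT.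
    case: (eqVneq u x) => [//|ux].
    case/or4P: (domr u uq) => [/eqP h|/eqP h|h|h].
    - by rewrite -h uW in aW.
    - by rewrite -h uW in bW.
    - by rewrite sym (negbTE (F2 _ uW ux)) in h.
    - by rewrite sym (negbTE (A1 _ uW ux)) in h.
  apply: (maxab eab); split; first exact: subsetT.
  split; first exact: (cl2 eab).
  move=> W' _ cW'.
  apply: leq_trans (maxW _ (subsetT _) cW') _.
  apply: leq_trans (subset_leq_card A5) _.
  by rewrite !cards2 ab; case: (x != q).
have [wb wbW [wbx nbwb]] : exists2 wb, wb \in W & wb != x /\ ~~ e b wb.
  case: (pickP (fun w => [&& w \in W, w != x & ~~ e b w])) => [w /and3P [? ? ?]|H].
    by exists w.
  have H' : forall w, w \in W -> w != x -> e b w.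
    by move=> w wW wx; move: (H w); rewrite wW wx /= => /negbFE.
  pose W2 := b |: (W :\ x).
  have : max_clique [set: T] e W2.
    split; first exact: subsetT.
    split.
      apply/forallP => u; apply/implyP => uW2; apply/forallP => v; apply/implyP => vW2.
      apply/implyP => uv; move: uW2 vW2 uv; rewrite !inE.
      case/orP => [/eqP ->|/andP [ux uW]]; case/orP => [/eqP ->|/andP [vx vW]];
        rewrite ?eqxx // => h.
      + exact: H'.
      + by rewrite sym H'.
      + exact: clq.
    move=> W' _ cW'; apply: leq_trans (maxW _ (subsetT _) cW') _.
    by rewrite cardsU1 (cardsD1 x W) xW !inE (negbTE bW) andbF.
  move/minW/set0Pn => [u]; rewrite !inE => /andP [uI /orP [/eqP ub|/andP [ux uW]]].
    by rewrite -ub uI in bI.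
  by rewrite (IW u uI uW) eqxx in ux.
have [y1 [eay1 y1wb nwby1 _ _]] := wa wb wbW wbx.
have y1I : y1 \in I.
  case/or4P: (cover y1) => [//|y1W|/eqP h|/eqP h].
  - by rewrite clq // eq_sym in nwby1.
  - by rewrite h irrF in eay1.
  - by rewrite h (negbTE eab) in eay1.
have bwb : b != wb by rewrite eq_sym; apply: neqm wbW bW.
have T3 : 3 <= #|[set: T]| by rewrite cardsT.
have [D [/and3P [_ /forallP domD cnD] D3]] := gamma_lt (EC b wb bwb nbwb) T3.
have D2 : #|D| <= 2 by rewrite -ltnS.
have eq1 : forall u t, u != b -> u != wb -> add_edge e b wb u t = e u t.
  by move=> u t h1 h2; rewrite /add_edge /= (negbTE h1) (negbTE h2) /= !orbF.
have eq2 : forall u t, t != b -> t != wb -> add_edge e b wb u t = e u t.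
  by move=> u t h1 h2; rewrite /add_edge /= (negbTE h1) (negbTE h2) !andbF !orbF.
have domD' : forall u, (u \in D) || [exists y in D, add_edge e b wb u y].
  by move=> u; move: (domD u); rewrite in_setT.
have [d2 d2D d2bw] : exists2 d2, d2 \in D & (d2 == b) || (d2 == wb).
  case: (pickP (fun d => (d \in D) && ((d == b) || (d == wb)))) => [d /andP [? ?]|H].
    by exists d.
  have Hn : forall d, d \in D -> (d != b) && (d != wb).
    by move=> d dD; move: (H d); rewrite dD /= => /negbT; rewrite negb_or.
  exfalso; apply: no2; apply: leq_trans (gamma_le (D := D) _) D2.
  apply/and3P; split; first exact: subsetT.
    apply/forallP => u; apply/implyP => _.
    case/orP: (domD' u) => [->//|/existsP [y /andP [yD hy]]].
    apply/orP; right; apply/existsP; exists y; rewrite yD /=.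
    by case/andP: (Hn y yD) => h1 h2; rewrite -(eq2 u y h1 h2).
  have E : restr (add_edge e b wb) D =2 restr e D.
    move=> u v; rewrite /restr /=; case vD: (v \in D); last by rewrite !andbF.
    by case/andP: (Hn v vD) => h1 h2; rewrite eq2.
  apply/forallP => u; apply/implyP => uD; apply/forallP => v; apply/implyP => vD.
  rewrite -(eq_connect E).
  by move/forallP: cnD => /(_ u) /implyP /(_ uD) /forallP /(_ v) /implyP /(_ vD).
have awb : a != wb by rewrite eq_sym; apply: neqm wbW aW.
have [d1 d1D hd1] : exists2 d1, d1 \in D & (d1 == a) || e a d1.
  case/orP: (domD' a) => [aD|/existsP [y /andP [yD eay]]]; first by exists a; rewrite ?eqxx.
  by exists y; rewrite // eq1 // in eay; rewrite eay orbT.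
have d1b : d1 != b.
  case/orP: hd1 => [/eqP -> //|h]; apply/eqP => h'; by rewrite h' (negbTE eab) in h.
have d1wb : d1 != wb.
  case/orP: hd1 => [/eqP -> //|h]; apply/eqP => h'.
  by rewrite h' (negbTE (F2 wb wbW wbx)) in h.
have d12 : d1 != d2 by case/orP: d2bw => /eqP ->.
have HD := pairD_eq d1D d2D d12 D2.
have irr' : forall u, ~~ add_edge e b wb u u.
  move=> u; apply/negP; rewrite /add_edge /= irrF /=.
  by case/orP => /andP [/eqP -> /eqP h]; rewrite h eqxx in bwb.
have ed : e d1 d2.
  rewrite -(eq1 _ _ d1b d1wb); apply: (conn_pair irr' d1D) d12 _.
    by move=> u; rewrite HD !inE => /orP[] /eqP ->; [left|right].
  by move/forallP: cnD => /(_ d1) /implyP /(_ d1D) /forallP /(_ d2) /implyP /(_ d2D).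
have ead1 : e a d1.
  case/orP: hd1 => [/eqP h|//]; subst d1.
  by case/orP: d2bw => /eqP h; subst d2; [rewrite (negbTE eab) in ed|rewrite (negbTE (F2 wb wbW wbx)) in ed].
have d1I : d1 \in I.
  case/or4P: (cover d1) => [//|d1W|/eqP h|/eqP h].
  - case: (eqVneq d1 x) => [->//|d1x]; by rewrite (negbTE (F2 _ d1W d1x)) in ead1.
  - by rewrite h irrF in ead1.
  - by rewrite h eqxx in d1b.
have domP : forall u, [|| u == d1, u == d2, add_edge e b wb u d1 | add_edge e b wb u d2].
  move=> u; case/orP: (domD' u) => [|/existsP [y]]; rewrite HD !inE.
    by case/orP => ->; rewrite ?orbT.
  by case/andP => /orP[] /eqP -> ->; rewrite !orbT.
have xb : x != b by apply: neqm xI bI.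
case/orP: d2bw => /eqP d2e; subst d2.
- case/or4P: (domP x) => [/eqP h|/eqP h|h|h].
  + by rewrite -h (negbTE nxb) in ed.
  + by rewrite h eqxx in xb.
  + by rewrite eq2 // (negbTE (ind _ _ xI d1I)) in h.
  + by rewrite eq1 // ?(negbTE nxb) // eq_sym in h.
- have y1b : y1 != b by apply: neqm y1I bI.
  case/or4P: (domP y1) => [/eqP h|/eqP h|h|h].
  + by rewrite -h sym (negbTE nwby1) in ed.
  + by rewrite h eqxx in y1wb.
  + by rewrite eq2 // (negbTE (ind _ _ y1I d1I)) in h.
  + by rewrite eq1 // sym (negbTE nwby1) in h.
Qed.

Unset Implicit Arguments. Set Strict Implicit. Set Printing Implicit Defensive.

Theorem lemma3p5 (T : finType) (e : rel T) (I W : {set T}) :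
  simple_rel e ->
  conn_set e [set: T] ->
  maximal_vertex_critical 3 [set: T] e ->
  max_independent [set: T] e I ->
  max_clique [set: T] e W ->
  (forall W' : {set T}, max_clique [set: T] e W' -> #|I :&: W| <= #|I :&: W'|) ->
  #|I| + #|W| = #|T| - 1 ->
  #|W :&: I| = 0.
Proof.
move=> [sym irr] conn [[g3 EC] [[n2 _] [_ VCg]]] [_ [indI maxI]] [_ [clqW maxW]] Hmin Hsum.
have ind : forall u v, u \in I -> v \in I -> ~~ e u v.
  by move=> u v uI vI; move/forallP: indI => /(_ u) /implyP /(_ uI) /forallP /(_ v) /implyP /(_ vI).
have clq : forall u v, u \in W -> v \in W -> u != v -> e u v.
  move=> u v uW vW uv; move/forallP: clqW => /(_ u) /implyP /(_ uW) /forallP /(_ v) /implyP /(_ vW).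
  by move/implyP; apply.
apply/eqP; rewrite cards_eq0; apply: contraT => /set0Pn [x]; rewrite inE => /andP [xW xI]; exfalso.
have IW : forall u, u \in I -> u \in W -> u = x.
  move=> u uI uW; apply/eqP; apply: contraT => ux.
  by have := clq u x uW xW ux; rewrite (negbTE (ind u x uI xI)).
have IWx : I :&: W = [set x].
  by apply/setP => u; rewrite !inE; apply/andP/eqP => [[uI uW]|->]; [exact: IW|split].
have c1 : #|I :&: W| = 1 by rewrite IWx cards1.
have h1 := cardsC (I :|: W).
have h2 := cardsU I W.
have h3 : 0 < #|I| by apply/card_gt0P; exists x.
have h4 : 0 < #|W| by apply/card_gt0P; exists x.
have C2 : #|~: (I :|: W)| == 2.
  rewrite c1 in h2. lia.
have [a [b [ab HC]]] := cards2P _ C2.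
have inC : forall u, (u \in I) || (u \in W) || (u \in [set a; b]).
  by move=> u; rewrite -HC !inE; case: (u \in I) (u \in W) => [] [].
have cover : forall u, [|| u \in I, u \in W, u == a | u == b].
  by move=> u; move: (inC u); rewrite !inE -!orbA.
have aC : a \in ~: (I :|: W) by rewrite HC !inE eqxx.
have bC : b \in ~: (I :|: W) by rewrite HC !inE eqxx orbT.
move: aC bC; rewrite !inE !negb_or => /andP [aI aW] /andP [bI bW].
have irrF : forall u, e u u = false by move=> u; apply: negbTE.
have n4 : 4 <= #|T|.
  case: (boolP (e a b)) => eab.
    have : clique e [set a; b].
      apply/forallP => u; apply/implyP => uab; apply/forallP => v; apply/implyP => vab.
      apply/implyP => uv; move: uab vab uv; rewrite !inE => /orP[] /eqP -> /orP[] /eqP ->;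
        rewrite ?eqxx // => _; by rewrite sym.
    move/(maxW _ (subsetT _)); rewrite cards2 ab => h5; lia.
  have : independent e [set a; b].
    apply/forallP => u; apply/implyP => uab; apply/forallP => v; apply/implyP => vab.
    move: uab vab; rewrite !inE => /orP[] /eqP -> /orP[] /eqP ->; rewrite ?irr //.
    by rewrite sym.
  move/(maxI _ (subsetT _)); rewrite cards2 ab => h5; lia.
have VC := fun v => vc (conj sym irr) conn g3 (VCg v (in_setT v)) n4.
have EC' : forall u v, u != v -> ~~ e u v -> gamma_c [set: T] (add_edge e u v) < 3.
  by move=> u v; apply: EC; apply: in_setT.
have n3 : 3 <= #|T| by lia.
have minW : forall W' : {set T}, max_clique [set: T] e W' -> I :&: W' != set0.
  by move=> W' mc; rewrite -card_gt0; move: (Hmin W' mc); rewrite c1.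
have [p [q [[epq px qx nxp nxq] domx]]] := VC x.
have nx : forall u, u != x -> ~~ e x u -> [|| u \in I, u == a | u == b].
  move=> u ux nxu; case/or4P: (cover u) => [->//|uW|->|->]; rewrite ?orbT //.
  by rewrite clq // eq_sym in nxu.
have [c [cab nxc]] : exists c, ((c == a) || (c == b)) /\ ~~ e x c.
  case/or3P: (nx p px nxp) => [pI|pa|pb]; last 2 first.
  - by exists p; rewrite pa.
  - by exists p; rewrite pb orbT.
  case/or3P: (nx q qx nxq) => [qI|qa|qb].
  - by rewrite (negbTE (ind _ _ pI qI)) in epq.
  - by exists q; rewrite qa.
  - by exists q; rewrite qb orbT.
have [w0 w0W w0x] : exists2 w0, w0 \in W & w0 != x.
  have pq : p != q by apply/eqP => h; rewrite h irrF in epq.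
  have : clique e [set p; q].
    apply/forallP => u; apply/implyP => uab; apply/forallP => v; apply/implyP => vab.
    apply/implyP => uv; move: uab vab uv; rewrite !inE => /orP[] /eqP -> /orP[] /eqP ->;
      rewrite ?eqxx // => _; by rewrite sym.
  move/(maxW _ (subsetT _)); rewrite cards2 pq (cardsD1 x W) xW add1n ltnS.
  by case/card_gt0P => w; rewrite !inE => /andP [wx wW]; exists w.
have [c' [c'ab exc']] : exists c', ((c' == a) || (c' == b)) /\ e x c'.
  have [p' [q' [[_ p'w q'w nwp' nwq'] domw]]] := VC w0.
  have key : forall r, r != w0 -> ~~ e w0 r -> e x r -> exists c', ((c' == a) || (c' == b)) /\ e x c'.
    move=> r rw nwr exr; case/or4P: (cover r) => [rI|rW|ra|rb].
    - by rewrite (negbTE (ind _ _ xI rI)) in exr.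
    - by rewrite clq // eq_sym in nwr.
    - by exists r; rewrite ra.
    - by exists r; rewrite rb orbT.
  have xw : x != w0 by rewrite eq_sym.
  case/or4P: (domw x xw) => [/eqP h|/eqP h|h|h].
  - by rewrite -h clq // in nwp'.
  - by rewrite -h clq // in nwq'.
  - exact: (key p').
  - exact: (key q').
have cc : c != c' by apply/eqP => h; rewrite h exc' in nxc.
case/orP: cab => /eqP ce; case/orP: c'ab => /eqP c'e; subst c c'.
- by rewrite eqxx in cc.
- have cover' : forall u, [|| u \in I, u \in W, u == b | u == a].
    by move=> u; case/or4P: (cover u) => ->; rewrite ?orbT.
  have ba : b != a by rewrite eq_sym.
  exact: (core sym irr ind clq xI xW IW cover' bI bW aI aW ba exc' nxc VC g3 EC' n3 minW
          (fun W' s c => maxW W' s c)).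
- exact: (core sym irr ind clq xI xW IW cover aI aW bI bW ab exc' nxc VC g3 EC' n3 minW
          (fun W' s c => maxW W' s c)).
- by rewrite eqxx in cc.
Qed.
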